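(* Let $m\ge 2$ be an integer and consider a preferential (dynamic) attachment circuit of index $m$. Let $Y_n^{(0)}$ and $Y_n^{(1)}$ be the numbers of nodes of outdegree $0$ and of outdegree $1$ in the circuit after $n$ insertions. Then for every $n\ge 1$, $$\mathbb{E}[Y_n^{(0)}]=\frac{(m+1)n+m}{2m+1},\qquad \mathbb{E}[Y_n^{(1)}]=\frac{(m+1)(n-1)\bigl((2m^2+2m)n+2m^2+m+1\bigr)}{2(3m+1)(2m+1)\bigl((m+1)n-1\bigr)},$$ and consequently, as $n\to\infty$, $\mathbb{E}[Y_n^{(0)}]\sim \frac{m+1}{2m+1}\,n$ and $\mathbb{E}[Y_n^{(1)}]\sim \frac{m(m+1)}{(3m+1)(2m+1)}\,n$.
   Context: Preferential (dynamic) attachment circuit of index $m\ge1$: at time $0$ there is a single node labeled $0$. At each time $n\ge1$ a new node labeled $n$ is added and $m$ parents are chosen for it one at a time, with replacement, among nodes $0,\dots,n-1$. Before the $(i+1)$-th choice ($i=0,\dots,m-1$), each existing node $v$ is chosen with probability $\frac{d_i(v)+1}{\sum_{x}(d_i(x)+1)}$, where $d_i(x)$ is the outdegree of $x$ in the current multigraph, which already includes the edges created by the first $i$ choices for node $n$; after each choice an edge from the chosen parent to node $n$ is immediately added (multiple edges between the same pair are allowed and counted with multiplicity). The outdegree of a node is the number of edges (with multiplicity) going to nodes with larger labels. *)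

(* Defs.v *)
From HB Require Import structures.
From mathcomp Require Import all_boot all_order all_algebra.
From mathcomp Require Import all_classical all_reals all_analysis.
Set Implicit Arguments. Unset Strict Implicit. Unset Printing Implicit Defensive.
Import Order.TTheory GRing.Theory Num.Theory.
Local Open Scope ring_scope.

(* A state of the circuit is the sequence of outdegrees d = [:: d(0); ...; d(n)]
   of the nodes 0..n.  A (finitely supported) probability distribution over
   states is a list of (state, probability) pairs; repetitions are allowed
   and their masses add up. *)
Definition dist (R : numFieldType) := seq (seq nat * R).

Definition dbind (R : numFieldType) (D : dist R) (K : seq nat -> dist R) : dist R :=
  flatten [seq [seq (t.1, sp.2 * t.2) | t <- K sp.1] | sp <- D].

(* One parent choice: node v (among the existing nodes 0..size d - 1) is
   chosen with probability (d(v)+1) / sum_x (d(x)+1), and its outdegree is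
   incremented (the edge from v to the new node is added immediately). *)
Definition choose_parent (R : numFieldType) (d : seq nat) : dist R :=
  [seq (incr_nth d v, (nth 0%N d v).+1%:R / (sumn d + size d)%:R)
  | v <- iota 0 (size d)].

Definition insert_node (R : numFieldType) (m : nat) (d : seq nat) : dist R :=
  dbind (iter m (fun D => dbind D (@choose_parent R)) [:: (d, 1)])
        (fun d' => [:: (rcons d' 0%N, 1)]).

Fixpoint pa_dist (R : numFieldType) (m n : nat) : dist R :=
  match n with
  | 0 => [:: ([:: 0%N], 1)]
  | n'.+1 => dbind (pa_dist R m n') (insert_node R m)
  end.

Definition nodes_outdeg (k : nat) (d : seq nat) : nat := count (pred1 k) d.

Definition EY (R : numFieldType) (m k n : nat) : R :=
  \sum_(sp <- pa_dist R m n) sp.2 * (nodes_outdeg k sp.1)%:R.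

(* Main.v *)
Require Import Defs.
From HB Require Import structures.
From mathcomp Require Import all_boot all_order all_algebra.
From mathcomp Require Import all_classical all_reals all_analysis.
From mathcomp Require Import ring lra zify.
Import Order.TTheory GRing.Theory Num.Theory.
Import numFieldNormedType.Exports.
Local Open Scope classical_set_scope.
Local Open Scope ring_scope.
Set Implicit Arguments. Unset Strict Implicit.

Definition Ex (R : numFieldType) (D : dist R) (f : seq nat -> R) : R :=
  \sum_(sp <- D) sp.2 * f sp.1.

Definition inv (R : numFieldType) (D : dist R) (P : seq nat -> Prop) :=
  forall sp, sp \in D -> P sp.1.

Lemma Ex_bind (R : numFieldType) (D : dist R) K f :
  Ex (dbind D K) f = Ex D (fun s => Ex (K s) f).
Proof.
rewrite /Ex /dbind big_flatten /= big_map; apply: eq_bigr => sp _.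
rewrite big_map big_distrr; apply: eq_bigr => t _ /=; by rewrite mulrA.
Qed.

Lemma Ex_ext (R : numFieldType) (D : dist R) f g :
  (forall sp, sp \in D -> f sp.1 = g sp.1) -> Ex D f = Ex D g.
Proof.
move=> H; rewrite /Ex big_seq [RHS]big_seq; apply: eq_bigr => sp /H ->; done.
Qed.

Lemma Ex_lin (R : numFieldType) (D : dist R) f g a b c :
  Ex D (fun s => a * f s + b * g s + c) = a * Ex D f + b * Ex D g + c * Ex D (fun=> 1).
Proof.
rewrite /Ex !big_distrr -!big_split /=; apply: eq_bigr => sp _; ring.
Qed.

Lemma inv_bind (R : numFieldType) (D : dist R) K (P Q : seq nat -> Prop) :
  inv D P -> (forall s, P s -> inv (K s) Q) -> inv (dbind D K) Q.
Proof.
move=> HD HK sp /flattenP [l /mapP [sp0 Hsp0 ->]] /mapP [t Ht ->] /=.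
exact: (HK _ (HD _ Hsp0)) t Ht.
Qed.

Lemma count_incr (d : seq nat) v k : (v < size d)%N ->
  (count (pred1 k) (incr_nth d v) + (nth 0%N d v == k) =
   count (pred1 k) d + ((nth 0%N d v).+1 == k))%N.
Proof.
elim: d v => [|x d IH] [|v] //= Hv.
  lia.
rewrite -!addnA IH //.
Qed.

Lemma sum_succ (R : numFieldType) (d : seq nat) :
  \sum_(x <- d) (x.+1)%:R = (sumn d + size d)%:R :> R.
Proof.
elim: d => [|x d IH]; rewrite ?big_nil ?big_cons //= IH -natrD; congr _%:R.
by rewrite addnS addSn addnA.
Qed.

Lemma sum_eqk (R : numFieldType) (d : seq nat) k :
  \sum_(x <- d) (x.+1)%:R * (x == k)%:R = (k.+1 * count (pred1 k) d)%:R :> R.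
Proof.
elim: d => [|x d IH]; rewrite ?big_nil ?big_cons //= ?muln0 // IH -natrM -natrD.
congr _%:R; case: eqP => [->|_] /=; lia.
Qed.
Lemma sum_eqk1 (R : numFieldType) (d : seq nat) k :
  \sum_(x <- d) (x.+1)%:R * (x.+1 == k)%:R = (k * count (pred1 k.-1) d)%:R :> R.
Proof.
elim: d => [|x d IH]; rewrite ?big_nil ?big_cons //= ?muln0 // IH -natrM -natrD.
congr _%:R; case: k {IH} => [|k] /=; first lia.
rewrite eqSS; case: eqP => [->|_] /=; lia.
Qed.

Lemma mem_cp (R : numFieldType) d sp : sp \in choose_parent R d ->
  exists2 v, (v < size d)%N & sp = (incr_nth d v, (nth 0%N d v).+1%:R / (sumn d + size d)%:R).
Proof.
by move=> /mapP [v]; rewrite mem_iota add0n => Hv ->; exists v.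
Qed.


Lemma Ex_cp (R : numFieldType) d k : (0 < sumn d + size d)%N ->
  Ex (choose_parent R d) (fun s => (count (pred1 k) s)%:R) =
  ((sumn d + size d)%:R - k.+1%:R) / (sumn d + size d)%:R * (count (pred1 k) d)%:R
  + k%:R / (sumn d + size d)%:R * (count (pred1 k.-1) d)%:R.
Proof.
move=> W0; set W := (sumn d + size d)%:R.
have WN : W != 0 by rewrite pnatr_eq0 -lt0n.
set c := (count (pred1 k) d)%:R.
pose G x := (x.+1)%:R / W * (c - (x == k)%:R + (x.+1 == k)%:R).
rewrite /Ex /choose_parent big_map /=.
have -> : \sum_(i <- iota 0 (size d))
   (nth 0%N d i).+1%:R / (sumn d + size d)%:R * (count (pred1 k) (incr_nth d i))%:R
   = \sum_(i <- iota 0 (size d)) G (nth 0%N d i).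
  rewrite big_seq [RHS]big_seq; apply: eq_bigr => v; rewrite mem_iota add0n => Hv.
  rewrite /G /c; congr (_ * _).
  have := count_incr k Hv => /(congr1 (fun n => n%:R : R)); rewrite !natrD => H.
  apply: (addIr ((nth 0%N d v == k)%:R)); rewrite H; ring.
rewrite (_ : \sum_(i <- iota 0 (size d)) G (nth 0%N d i) = \sum_(x <- d) G x); last first.
  by rewrite (big_nth 0%N xpredT G) /index_iota subn0.
rewrite /G.
have -> : \sum_(x <- d) x.+1%:R / W * (c - (x == k)%:R + (x.+1 == k)%:R) =
   W^-1 * (c * \sum_(x <- d) x.+1%:R - \sum_(x <- d) (x.+1%:R * (x == k)%:R)
     + \sum_(x <- d) (x.+1%:R * (x.+1 == k)%:R)).
  rewrite (big_distrr c) -sumrB -big_split big_distrr; apply: eq_bigr => x _ /=; ring.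
rewrite sum_succ sum_eqk sum_eqk1 -/W !natrM.
field.
by rewrite -natrD.
Qed.

Lemma sumn_incr (s : seq nat) v : (v < size s)%N -> sumn (incr_nth s v) = (sumn s).+1.
Proof. elim: s v => [|x s IH] [|v] //= Hv; rewrite IH //; lia. Qed.

Lemma Ex_cp_mass (R : numFieldType) d : (0 < sumn d + size d)%N ->
  Ex (choose_parent R d) (fun=> 1) = 1.
Proof.
move=> W0; rewrite /Ex /choose_parent big_map /=.
under eq_bigr do rewrite mulr1.
rewrite -big_distrl /=.
rewrite (_ : \sum_(i <- iota 0 (size d)) (nth 0%N d i).+1%:R = \sum_(x <- d) x.+1%:R :> R); last first.
  by rewrite (big_nth 0%N xpredT (fun x => x.+1%:R)) /index_iota subn0.
by rewrite sum_succ divff // pnatr_eq0 -lt0n.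
Qed.

Lemma Ex_seq1 (R : numFieldType) (d : seq nat) f : Ex [:: (d, (1 : R))] f = f d.
Proof. by rewrite /Ex big_cons big_nil /= mul1r addr0. Qed.

Definition cnt (R : numFieldType) k (s : seq nat) : R := (count (pred1 k) s)%:R.

Lemma iter_inv (R : numFieldType) d i : (0 < sumn d + size d)%N ->
  let D := iter i (fun D => dbind D (@choose_parent R)) [:: (d, 1)] in
  let w := (sumn d + size d)%:R : R in
  [/\ inv D (fun s => sumn s = (sumn d + i)%N /\ size s = size d),
     Ex D (fun=> 1) = 1,
     Ex D (cnt R 0) * (w + i%:R - 1) = cnt R 0 d * (w - 1) &
     Ex D (cnt R 1) * ((w + i%:R - 2) * (w + i%:R - 1)) =
       cnt R 1 d * ((w - 2) * (w - 1)) + i%:R * cnt R 0 d * (w - 1)].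
Proof.
move=> W0 /=; set w := (sumn d + size d)%:R.
elim: i => [|i [Hinv Hm H0 H1]].
  rewrite /= !Ex_seq1 !addr0 !mul0r !addr0; split => //.
  by move=> sp; rewrite mem_seq1 => /eqP -> /=; rewrite addn0.
rewrite iterS; set D := iter i _ _.
have Wi : w + i%:R != 0 by rewrite /w -natrD pnatr_eq0 -lt0n addn_gt0 W0.
have HW : forall s, sumn s = (sumn d + i)%N /\ size s = size d ->
   (sumn s + size s)%:R = w + i%:R :> R.
  by move=> s [-> ->]; rewrite addnAC natrD.
have HW0 : forall s, sumn s = (sumn d + i)%N /\ size s = size d -> (0 < sumn s + size s)%N.
  by move=> s [-> ->]; rewrite addnAC addn_gt0 W0.
rewrite /=; split.
- apply: inv_bind Hinv _ => s [Hs Hz] sp /mem_cp [v Hv ->] /=.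
  by rewrite sumn_incr // size_incr_nth Hv Hs addnS.
- rewrite Ex_bind (@Ex_ext _ _ _ (fun=> 1)) //.
  move=> sp /Hinv Hs; exact: Ex_cp_mass (HW0 _ Hs).
- rewrite Ex_bind (@Ex_ext _ _ _ (fun s => (w + i%:R - 1) / (w + i%:R) * cnt R 0 s
      + 0 * cnt R 1 s + 0)); last first.
    move=> sp /Hinv Hs; rewrite /cnt Ex_cp ?HW0 // HW //; ring.
  rewrite Ex_lin -natr1 -H0; field.
  by move: Wi; rewrite /w natrD.
- rewrite Ex_bind (@Ex_ext _ _ _ (fun s => (1 / (w + i%:R)) * cnt R 0 s
      + (w + i%:R - 2) / (w + i%:R) * cnt R 1 s + 0)); last first.
    move=> sp /Hinv Hs; rewrite /cnt Ex_cp ?HW0 // HW //; ring.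
  rewrite Ex_lin -natr1.
  rewrite [RHS](_ : _ = Ex D (cnt R 1) * ((w + i%:R - 2) * (w + i%:R - 1))
                       + Ex D (cnt R 0) * (w + i%:R - 1)); last by rewrite H1 H0; ring.
  field.
  by move: Wi; rewrite /w natrD.
Qed.

Lemma ins_inv (R : realFieldType) m s : (0 < sumn s + size s)%N -> (2 <= m)%N ->
  let w := (sumn s + size s)%:R : R in
  [/\ inv (insert_node R m s) (fun t => sumn t = (sumn s + m)%N /\ size t = (size s).+1),
     Ex (insert_node R m s) (fun=> 1) = 1,
     Ex (insert_node R m s) (cnt R 0) = (w - 1) / (w + m%:R - 1) * cnt R 0 s + 1 &
     Ex (insert_node R m s) (cnt R 1) =
       m%:R * (w - 1) / ((w + m%:R - 2) * (w + m%:R - 1)) * cnt R 0 s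
       + (w - 2) * (w - 1) / ((w + m%:R - 2) * (w + m%:R - 1)) * cnt R 1 s].
Proof.
move=> W0 hm /=.
have [Hinv Hm H0 H1] := iter_inv R m W0.
rewrite /insert_node; set D := iter m _ _.
split.
- apply: inv_bind Hinv _ => t [Hs Hz] sp; rewrite mem_seq1 => /eqP -> /=.
  by rewrite sumn_rcons size_rcons Hs Hz addn0.
- by rewrite Ex_bind (@Ex_ext _ _ _ (fun=> 1)) // => sp _; rewrite Ex_seq1.
- rewrite Ex_bind (@Ex_ext _ D _ (fun t => 1 * cnt R 0 t + 0 * cnt R 1 t + 1)); last first.
    by move=> sp _; rewrite Ex_seq1 /cnt -cats1 count_cat /= natrD; ring.
  rewrite Ex_lin Hm.
  move: H0 H1; set w := (sumn s + size s)%:R.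
  have Hw : 1 <= w by rewrite /w ler1n.
  have Hm2 : 2 <= m%:R :> R by rewrite (ler_nat R 2 m).
  clearbody w => H0 H1.
  have nz1 : w + m%:R - 1 != 0 by apply: lt0r_neq0; lra.
  have -> : Ex D (cnt R 0) = cnt R 0 s * (w - 1) / (w + m%:R - 1) by rewrite -H0; field.
  by field.
- rewrite Ex_bind (@Ex_ext _ D _ (fun t => 0 * cnt R 0 t + 1 * cnt R 1 t + 0)); last first.
    by move=> sp _; rewrite Ex_seq1 /cnt -cats1 count_cat /=; ring.
  rewrite Ex_lin.
  move: H0 H1; set w := (sumn s + size s)%:R.
  have Hw : 1 <= w by rewrite /w ler1n.
  have Hm2 : 2 <= m%:R :> R by rewrite (ler_nat R 2 m).
  clearbody w => H0 H1.
  have nz1 : w + m%:R - 1 != 0 by apply: lt0r_neq0; lra.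
  have nz2 : w + m%:R - 2 != 0 by apply: lt0r_neq0; lra.
  have -> : Ex D (cnt R 0) = cnt R 0 s * (w - 1) / (w + m%:R - 1) by rewrite -H0; field.
  have -> : Ex D (cnt R 1) = (cnt R 1 s * ((w - 2) * (w - 1)) + m%:R * cnt R 0 s * (w - 1))
      / ((w + m%:R - 2) * (w + m%:R - 1)).
    by rewrite -H1; field; rewrite nz1 nz2.
  by field; rewrite nz1 nz2.
Qed.

Lemma pa_inv (R : realFieldType) m n : (2 <= m)%N ->
  inv (pa_dist R m n) (fun s => sumn s = (m * n)%N /\ size s = n.+1) /\
  Ex (pa_dist R m n) (fun=> 1) = 1.
Proof.
move=> hm; elim: n => [|n [Hinv Hm]].
  split; last by rewrite Ex_seq1.
  by move=> sp; rewrite mem_seq1 => /eqP -> /=; rewrite muln0.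
have W0 : forall s, sumn s = (m * n)%N /\ size s = n.+1 -> (0 < sumn s + size s)%N.
  by move=> s [-> ->]; rewrite addnS.
split => /=.
- apply: inv_bind Hinv _ => s Hs t Ht.
  have [Hi _ _ _] := ins_inv R (W0 _ Hs) hm.
  case: (Hi t Ht) => -> ->; case: Hs => -> ->; split => //; lia.
- rewrite Ex_bind (@Ex_ext _ _ _ (fun=> 1)) // => sp /Hinv Hs.
  by have [_ -> _ _] := ins_inv R (W0 _ Hs) hm.
Qed.

Lemma pa_rec (R : realFieldType) m n : (2 <= m)%N ->
  let w := (m * n + n.+1)%:R : R in
  Ex (pa_dist R m n.+1) (cnt R 0) = (w - 1) / (w + m%:R - 1) * Ex (pa_dist R m n) (cnt R 0) + 1 /\
  Ex (pa_dist R m n.+1) (cnt R 1) =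
       m%:R * (w - 1) / ((w + m%:R - 2) * (w + m%:R - 1)) * Ex (pa_dist R m n) (cnt R 0)
       + (w - 2) * (w - 1) / ((w + m%:R - 2) * (w + m%:R - 1)) * Ex (pa_dist R m n) (cnt R 1).
Proof.
move=> hm w; have [Hinv Hm] := pa_inv R n hm.
have W0 : forall s, sumn s = (m * n)%N /\ size s = n.+1 -> (0 < sumn s + size s)%N.
  by move=> s [-> ->]; rewrite addnS.
split => /=.
- rewrite Ex_bind (@Ex_ext _ _ _ (fun s => (w - 1) / (w + m%:R - 1) * cnt R 0 s
      + 0 * cnt R 1 s + 1)); last first.
    move=> sp /Hinv Hs; have [_ _ -> _] := ins_inv R (W0 _ Hs) hm.
    by case: Hs => -> ->; rewrite -/w; ring.
  by rewrite Ex_lin Hm; ring.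
- rewrite Ex_bind (@Ex_ext _ _ _ (fun s => 
       m%:R * (w - 1) / ((w + m%:R - 2) * (w + m%:R - 1)) * cnt R 0 s
       + (w - 2) * (w - 1) / ((w + m%:R - 2) * (w + m%:R - 1)) * cnt R 1 s + 0)); last first.
    move=> sp /Hinv Hs; have [_ _ _ ->] := ins_inv R (W0 _ Hs) hm.
    by case: Hs => -> ->; rewrite -/w; ring.
  by rewrite Ex_lin; ring.
Qed.

Definition f0 (R : realFieldType) (M x : R) := ((M + 1) * x + M) / (2 * M + 1).
Definition f1 (R : realFieldType) (M x : R) :=
  (M + 1) * (x - 1) * ((2 * M ^+ 2 + 2 * M) * x + 2 * M ^+ 2 + M + 1)
  / (2 * (3 * M + 1) * (2 * M + 1) * ((M + 1) * x - 1)).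

Lemma closed (R : realFieldType) m n : (2 <= m)%N ->
  Ex (pa_dist R m n.+1) (cnt R 0) = f0 m%:R n.+1%:R /\
  Ex (pa_dist R m n.+1) (cnt R 1) = f1 m%:R n.+1%:R.
Proof.
move=> hm.
have hM : 2 <= m%:R :> R by rewrite (ler_nat R 2 m).
elim: n => [|n [IH0 IH1]].
  have [-> ->] := pa_rec R 0 hm.
  rewrite !Ex_seq1 /cnt /f0 /f1 /= muln0 add0n.
  have nz : 2 * m%:R + 1 != 0 :> R by apply: lt0r_neq0; lra.
  rewrite subrr !(mulr0, mul0r) ?addr0 ?add0r.
  by split => //; field.
have [-> ->] := pa_rec R n.+1 hm.
rewrite IH0 IH1 /f0 /f1.
rewrite (_ : (m * n.+1 + n.+2 = (m.+1) * n.+1 + 1)%N); last lia.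
rewrite natrD natrM -[m.+1%:R]natr1 -[n.+2%:R]natr1.
have hx : 1 <= n.+1%:R :> R by rewrite ler1n.
move: hM hx; set x := n.+1%:R; set M := m%:R.
clearbody x M => hM hx.
split; field.
  by apply/andP; split; apply: lt0r_neq0; nra.
by apply/and5P; split; apply: lt0r_neq0; nra.
Qed.

Lemma lim_aux (R : realType) (a b : R) :
  (fun n => (1 - harmonic n) * (1 + a * harmonic n) / (1 - b * harmonic n)) @ \oo --> (1:R).
Proof.
rewrite -[X in _ --> X](_ : (1 - 0) * (1 + a * 0) / (1 - b * 0) = 1 :> R); last first.
  by rewrite !mulr0 subr0 addr0 divr1 mulr1.
apply: cvgM; [apply: cvgM|apply: cvgV].
- apply: cvgB; [exact: cvg_cst | exact: cvg_harmonic].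
- apply: cvgD; [exact: cvg_cst | apply: cvgM; [exact: cvg_cst | exact: cvg_harmonic]].
- by rewrite mulr0 subr0 oner_neq0.
- apply: cvgB; [exact: cvg_cst | apply: cvgM; [exact: cvg_cst | exact: cvg_harmonic]].
Qed.

Lemma lim_aux0 (R : realType) (a : R) :
  (fun n => 1 + a * harmonic n) @ \oo --> (1:R).
Proof.
rewrite -[X in _ --> X](_ : 1 + a * 0 = 1 :> R); last by rewrite mulr0 addr0.
apply: cvgD; [exact: cvg_cst | apply: cvgM; [exact: cvg_cst | exact: cvg_harmonic]].
Qed.

Theorem proposition1 (R : realType) (m : nat) (hm : (2 <= m)%N) :
  (forall n : nat, (1 <= n)%N ->
     EY R m 0 n = ((m + 1) * n + m)%:R / (2 * m + 1)%:R /\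
     EY R m 1 n =
       ((m + 1) * (n - 1) * ((2 * m ^ 2 + 2 * m) * n + 2 * m ^ 2 + m + 1))%:R
       / (2 * (3 * m + 1) * (2 * m + 1) * ((m + 1) * n - 1))%:R) /\
  (((fun n : nat => EY R m 0 n / ((m + 1)%:R / (2 * m + 1)%:R * n%:R)) @ \oo) --> (1 : R)) /\
  (((fun n : nat => EY R m 1 n /
       ((m * (m + 1))%:R / ((3 * m + 1) * (2 * m + 1))%:R * n%:R)) @ \oo) --> (1 : R)).
Proof.
have EYe : forall k n, EY R m k n = Ex (pa_dist R m n) (cnt R k) by [].
have hM : 2 <= m%:R :> R by rewrite (ler_nat R 2 m).
split; [|split].
- case=> [//|k] _; rewrite !EYe; have [-> ->] := closed R k hm; split.
  + rewrite /f0 -[k.+1%:R]natr1 !(natrD, natrM) -[k.+1%:R]natr1.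
    by [].
  + rewrite (_ : (k.+1 - 1 = k)%N); last lia.
    rewrite (_ : ((m + 1) * k.+1 - 1 = (m + 1) * k + m)%N); last lia.
    rewrite /f1 -[k.+1%:R]natr1 !(natrD, natrM, natrX) -[k.+1%:R]natr1.
    rewrite addrK (_ : (m%:R + 1) * (k%:R + 1) - 1 = (m%:R + 1) * k%:R + m%:R :> R) //; ring.
- rewrite -cvg_shiftS.
  rewrite [X in X @ \oo --> _](_ : _ = (fun n => 1 + m%:R / (m%:R + 1) * harmonic n)).
    exact: lim_aux0.
  apply/funext => n /=; rewrite EYe; have [-> _] := closed R n hm.
  rewrite /f0 !(natrD, natrM).
  have hx : 1 <= n.+1%:R :> R by rewrite ler1n.
  move: hM hx; set x := n.+1%:R; set M := m%:R; clearbody x M => hM hx.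
  field.
  by apply/and3P; split; apply: lt0r_neq0; nra.
- rewrite -cvg_shiftS.
  rewrite [X in X @ \oo --> _](_ : _ = (fun n => (1 - harmonic n) *
     (1 + (2 * m%:R ^+ 2 + m%:R + 1) / (2 * m%:R * (m%:R + 1)) * harmonic n)
     / (1 - (m%:R + 1)^-1 * harmonic n))).
    exact: lim_aux.
  apply/funext => n /=; rewrite EYe; have [_ ->] := closed R n hm.
  rewrite /f1 !(natrD, natrM).
  have hx : 1 <= n.+1%:R :> R by rewrite ler1n.
  move: hM hx; set x := n.+1%:R; set M := m%:R; clearbody x M => hM hx.
  field.
  by rewrite !lt0r_neq0 //; nra.
Qed.
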